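(* Let $T$ be a noncrossing tree with vertex set $[n]$, with signature $s(T)=(s_1,\dots,s_n)$, and let $\overline{ik}\in T$ with $i<k$. Then $s_j\ge s_i$ for all $i<j<k$. Moreover, if $i<j<k$ and the path from $j$ to $k$ in $T$ does not contain $i$, then $s_j\ge s_i+1$.
   Context: A graph on $[n]$ is noncrossing if it has no two edges $\overline{ac},\overline{bd}$ with $a<b<c<d$. The signature of a noncrossing tree $T$ on $[n]$ is the sequence $s(T)=(s_1,\dots,s_n)$ defined by $s_1=1$ and, for $i>1$: $s_i=s_j$ where $j<i$ is the minimum vertex with $\overline{ji}\in T$, if such $j$ exists; otherwise $s_i=s_{i-1}+1$. *)

(* Defs.v *)
From mathcomp Require Import all_boot.
Set Implicit Arguments. Unset Strict Implicit. Unset Printing Implicit Defensive.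

(* Vertices are the natural numbers 1..n; a graph on [n] is given by its
   adjacency relation [adj : rel nat] (symmetric, loopless, supported on [n]). *)

Definition in_range (n v : nat) : bool := (1 <= v) && (v <= n).

Definition is_graph (n : nat) (adj : rel nat) : Prop :=
  [/\ (forall a b, adj a b -> in_range n a && in_range n b),
      (forall a b, adj a b = adj b a) &
      (forall a, ~~ adj a a)].

Definition num_edges (n : nat) (adj : rel nat) : nat :=
  \sum_(1 <= a < n.+1) \sum_(a.+1 <= b < n.+1) (adj a b : nat).

Definition connected_on (n : nat) (adj : rel nat) : Prop :=
  forall x y, in_range n x -> in_range n y ->
    exists p : seq nat, path adj x p && (last x p == y).

Definition is_tree (n : nat) (adj : rel nat) : Prop :=
  [/\ is_graph n adj, connected_on n adj & num_edges n adj = n.-1].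

Definition noncrossing (adj : rel nat) : Prop :=
  forall a b c d, a < b -> b < c -> c < d -> ~~ (adj a c && adj b d).

Definition noncrossing_tree (n : nat) (adj : rel nat) : Prop :=
  is_tree n adj /\ noncrossing adj.

(* sigs adj k = [:: s_1; ...; s_k] *)
Fixpoint sigs (adj : rel nat) (k : nat) : seq nat :=
  match k with
  | 0 => [::]
  | k'.+1 =>
      let l := sigs adj k' in
      let i := k'.+1 in
      rcons l
        (if i == 1 then 1 else
         match [seq j <- iota 1 k' | adj j i] with
         | j :: _ => nth 0 l j.-1      (* j = minimum vertex < i adjacent to i *)
         | [::] => (last 0 l).+1       (* s_{i-1} + 1 *)
         end)
  end.

Definition signature (adj : rel nat) (i : nat) : nat := nth 0 (sigs adj i) i.-1.

(* p encodes the simple path j :: p from j to k in the graph *)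
Definition simple_path (adj : rel nat) (j : nat) (p : seq nat) (k : nat) : bool :=
  [&& path adj j p, last j p == k & uniq (j :: p)].

(* Main.v *)
Require Import Defs.
From mathcomp Require Import all_boot.
From mathcomp Require Import zify.
From Stdlib Require Import Classical.
Set Implicit Arguments. Unset Strict Implicit. Unset Printing Implicit Defensive.

Definition reach (g : rel nat) x y := exists p : seq nat, path g x p && (last x p == y).

Lemma reach_refl g x : reach g x x.
Proof. by exists [::]; rewrite /= eqxx. Qed.

Lemma reach_edge (g : rel nat) x y : g x y -> reach g x y.
Proof. by move=> h; exists [:: y]; rewrite /= h eqxx. Qed.

Lemma reach_trans g x y z : reach g x y -> reach g y z -> reach g x z.
Proof.
move=> [p /andP[hp /eqP hl]] [q /andP[hq /eqP hl']].
by exists (p ++ q); rewrite cat_path last_cat hl hp hq hl' eqxx.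
Qed.

Lemma reach_sym (g : rel nat) x y : (forall a b, g a b = g b a) -> reach g x y -> reach g y x.
Proof.
move=> hs [p]; elim: p x => [|z p IH] x /=.
  by move=> /eqP ->; apply: reach_refl.
move=> /andP[/andP[hxz hp] hl].
apply: reach_trans (IH z _) _; first by rewrite hp hl.
by apply: reach_edge; rewrite hs.
Qed.

Lemma path_restrict (e e' : rel nat) (P : pred nat) x s :
  (forall a b, P a -> P b -> e a b -> e' a b) -> all P (x :: s) -> path e x s -> path e' x s.
Proof.
move=> H; elim: s x => [|y s IH] x //= /and3P[Px Py Ps] /andP[exy ps].
by rewrite (H _ _ Px Py exy) IH //= Py.
Qed.

Lemma sum_lt (r : seq nat) (F G : nat -> nat) x : uniq r -> x \in r ->
  (forall i, G i <= F i) -> G x < F x -> \sum_(i <- r) G i < \sum_(i <- r) F i.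
Proof.
move=> ur xr hle hlt.
rewrite (bigD1_seq x xr ur) (bigD1_seq x xr ur) /=.
rewrite -addSn; apply: leq_add => //; exact: leq_sum.
Qed.

Lemma bool_le (b1 b2 : bool) : (b1 -> b2) -> (b1 : nat) <= b2.
Proof. by case: b1 b2 => [] [] // /(_ isT). Qed.

Definition rem_edge (g : rel nat) u w : rel nat :=
  fun a b => g a b && ~~ (((a == u) && (b == w)) || ((a == w) && (b == u))).

Lemma rem_edge_graph n (g : rel nat) u w : is_graph n g -> is_graph n (rem_edge g u w).
Proof.
move=> [hr hs hl]; split.
- by move=> a b /andP[/hr].
- move=> a b; rewrite /rem_edge hs.
  by case: (a == u); case: (b == w); case: (a == w); case: (b == u).
- by move=> a; rewrite /rem_edge (negbTE (hl a)).
Qed.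

Lemma num_edges_rem n (g : rel nat) u w : 1 <= u -> u < w -> w <= n -> g u w ->
  num_edges n (rem_edge g u w) < num_edges n g.
Proof.
move=> h1 huw hwn e.
rewrite /num_edges; apply: (@sum_lt _ _ _ u).
- exact: iota_uniq.
- by rewrite mem_index_iota h1 ltnS (leq_trans (ltnW huw) hwn).
- move=> a; apply: leq_sum => b _; apply: bool_le; by case/andP.
- apply: (@sum_lt _ _ _ w).
  + exact: iota_uniq.
  + by rewrite mem_index_iota huw ltnS.
  + move=> b; apply: bool_le; by case/andP.
  + by rewrite /rem_edge e !eqxx.
Qed.

Lemma cover_noedge n (g : rel nat) S : is_graph n g ->
  (forall a b, 1 <= a -> a < b -> b <= n -> ~~ g a b) ->
  (forall v, in_range n v -> exists2 s, s \in S & reach g v s) -> n <= size S.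
Proof.
move=> [hr hs hl] hne hc.
have -> : n = size (iota 1 n) by rewrite size_iota.
apply: uniq_leq_size; first exact: iota_uniq.
move=> v; rewrite mem_iota add1n ltnS => hv.
have [s sS [p /andP[hp /eqP hl']]] := hc v hv.
case: p hp hl' => [|z p] /=; first by move=> _ ->.
move=> /andP[hvz _] _.
move: (hr _ _ hvz); rewrite /in_range => /andP[/andP[hv1 hvn] /andP[hz1 hzn]].
case: (ltngtP v z) => hvz'.
- by move: (hne _ _ hv1 hvz' hzn); rewrite hvz.
- by move: (hne _ _ hz1 hvz' hvn); rewrite hs hvz.
- by move: hvz; rewrite -hvz' (negbTE (hl v)).
Qed.

Lemma split_path (g : rel nat) u w x p :
  path g x p ->
  reach (rem_edge g u w) x (last x p) \/
  ((reach (rem_edge g u w) x u \/ reach (rem_edge g u w) x w) /\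
   (reach (rem_edge g u w) u (last x p) \/ reach (rem_edge g u w) w (last x p))).
Proof.
elim: p x => [|z p IH] x /=; first by left; apply: reach_refl.
move=> /andP[hxz hp].
case E: (rem_edge g u w x z).
- case: (IH z hp) => [hr|[h1 h2]].
  + by left; apply: reach_trans (reach_edge E) hr.
  + right; split => //; case: h1 => h; [left|right]; exact: reach_trans (reach_edge E) h.
- have hc : ((x == u) && (z == w)) || ((x == w) && (z == u)).
    by move: E; rewrite /rem_edge hxz /= => /negbFE.
  right; split.
  + by case/orP: hc => /andP[/eqP -> _]; [left|right]; apply: reach_refl.
  + case: (IH z hp) => [hr|[_ h2]] //.
    by case/orP: hc => /andP[_ /eqP hz]; move: hr; rewrite hz => hr; [right|left].
Qed.

Lemma cover_bound n m : forall (g : rel nat) (S : seq nat), is_graph n g -> num_edges n g = m ->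
  (forall v, in_range n v -> exists2 s, s \in S & reach g v s) -> n <= size S + num_edges n g.
Proof.
elim/ltn_ind: m => m IH g S hg hm hc.
case: (classic (exists a b, [/\ 1 <= a, a < b, b <= n & g a b]))
  => [[u [w [h1 huw hwn e]]]|hne]; last first.
  apply: leq_trans (leq_addr _ _). apply: (cover_noedge hg _ hc).
  move=> a b ha hab hb; apply/negP => hab'; apply: hne; by exists a, b.
have hlt := num_edges_rem h1 huw hwn e.
have hlt' : num_edges n (rem_edge g u w) < m by rewrite -hm.
have hg' : is_graph n (rem_edge g u w) := rem_edge_graph u w hg.
have fin : forall S' : seq nat, size S' = (size S).+1 -> n <= size S' + num_edges n (rem_edge g u w) ->
    n <= size S + num_edges n g.
  move=> S' -> H; apply: leq_trans H _; rewrite addSn -addnS leq_add2l; exact hlt.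
case: (classic (exists2 s, s \in S & reach (rem_edge g u w) w s)) => [[s0 s0S hw]|hnw].
- apply: (fin (u :: S)) => //; apply: (IH _ hlt' _ _ hg' erefl).
  move=> v hv; case: (hc v hv) => s sS [p /andP[hp /eqP hl]].
  case: (@split_path g u w v p hp) => [hr|[[hvu|hvw] _]].
  + by exists s; [rewrite inE sS orbT | rewrite -hl].
  + by exists u; [rewrite inE eqxx|].
  + by exists s0; [rewrite inE s0S orbT | apply: reach_trans hvw hw].
- apply: (fin (w :: S)) => //; apply: (IH _ hlt' _ _ hg' erefl).
  move=> v hv; case: (hc v hv) => s sS [p /andP[hp /eqP hl]].
  case: (@split_path g u w v p hp) => [hr|[[hvu|hvw] [hus|hws]]].
  + by exists s; [rewrite inE sS orbT | rewrite -hl].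
  + by exists s; [rewrite inE sS orbT | rewrite -hl; apply: reach_trans hvu hus].
  + by exfalso; apply: hnw; exists s => //; rewrite -hl.
  + by exists w; [rewrite inE eqxx|].
  + by exists w; [rewrite inE eqxx|].
Qed.

Lemma size_sigs adj k : size (sigs adj k) = k.
Proof. by elim: k => //= k IH; rewrite size_rcons IH. Qed.

Lemma sigs_nth adj k x : 1 <= x <= k -> nth 0 (sigs adj k) x.-1 = signature adj x.
Proof.
elim: k => [|k IH] /andP[h1 h2]; first by move: (leq_trans h1 h2).
move: h2; rewrite leq_eqVlt => /orP[/eqP hx|h2]; first by rewrite hx.
rewrite [sigs adj k.+1]/= nth_rcons size_sigs.
have -> : x.-1 < k by clear IH; case: x h1 h2.
by rewrite IH // h1.
Qed.

Lemma sig_rec (adj : rel nat) x : 2 <= x ->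
  (exists2 m, 1 <= m < x & adj m x /\ signature adj x = signature adj m) \/
  ((forall j, 1 <= j < x -> ~~ adj j x) /\ signature adj x = (signature adj x.-1).+1).
Proof.
case: x => [|k] // hk.
have -> : signature adj k.+1 =
   match [seq j <- iota 1 k | adj j k.+1] with
    | [::] => (last 0 (sigs adj k)).+1
    | j :: _ => nth 0 (sigs adj k) j.-1
    end.
  rewrite /signature [sigs adj k.+1]/= nth_rcons size_sigs ltnn eqxx /=.
  by case: k hk.
case E: [seq j <- iota 1 k | adj j k.+1] => [|m r].
- right; split.
  + move=> j hj; apply/negP => hadj.
    have : j \in [seq j <- iota 1 k | adj j k.+1] by rewrite mem_filter hadj mem_iota add1n.
    by rewrite E.
  + by rewrite -nth_last size_sigs.
- left; have : m \in [seq j <- iota 1 k | adj j k.+1] by rewrite E mem_head.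
  rewrite mem_filter mem_iota add1n => /andP[hadj hm].
  exists m => //; split => //.
  by rewrite sigs_nth.
Qed.

Theorem lemma3p13 (n : nat) (adj : rel nat) (i k : nat) :
  noncrossing_tree n adj -> i < k -> adj i k ->
  (forall j, i < j -> j < k -> signature adj i <= signature adj j) /\
  (forall j (p : seq nat), i < j -> j < k ->
     simple_path adj j p k -> i \notin (j :: p) ->
     (signature adj i).+1 <= signature adj j).
Proof.
move=> [[hg hconn hne] hnc] hik eik.
have [hr hs hl] := hg.
have /andP[/andP[hi1 hin] /andP[hk1 hkn]] := hr _ _ eik.
have cross : forall j m, i < j -> j < k -> m < j -> adj m j -> i <= m.
  move=> j m hij hjk hmj hmj'; rewrite leqNgt; apply/negP => hmi.
  by move: (hnc m i j k hmi hij hjk); rewrite hmj' eik.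
have part1 : forall j, i <= j -> j < k -> signature adj i <= signature adj j.
  elim/ltn_ind => j IH hij hjk.
  case: (ltngtP i j) hij => // [hij _| <- _]; last done.
  have hj2 : 2 <= j by lia.
  case: (sig_rec adj hj2) => [[m /andP[hm1 hmj] [hadj ->]] | [_ ->]].
  - apply: IH => //; [exact: cross hadj | exact: ltn_trans hmj hjk].
  - apply: leq_trans (leqnSn _). apply: IH; lia.
have claim : forall j, i <= j -> j < k -> signature adj j = signature adj i ->
   exists q, [&& path adj j q, last j q == i & all (fun v => v < k) (j :: q)].
  elim/ltn_ind => j IH hij hjk heq.
  case: (ltngtP i j) hij => // [hij _| <- _]; last by exists [::]; rewrite /= eqxx hik.
  have hj2 : 2 <= j by lia.
  case: (sig_rec adj hj2) => [[m /andP[hm1 hmj] [hadj hsm]] | [_ hsj]].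
  - have him := cross _ _ hij hjk hmj hadj.
    have [q /and3P[hq hlq haq]] := IH m hmj him (ltn_trans hmj hjk) (etrans (esym hsm) heq).
    exists (m :: q); rewrite /= hs hadj hq hlq hjk /=; exact: haq.
  - have := part1 j.-1 ltac:(lia) ltac:(lia); lia.
split => [j hij hjk|j p hij hjk hsp hni]; first by apply: part1 => //; exact: ltnW.
have h1 := part1 j (ltnW hij) hjk.
rewrite ltn_neqAle h1 andbT; apply/negP => /eqP heq.
have [q /and3P[hq /eqP hlq haq]] := claim j (ltnW hij) hjk (esym heq).
move: hsp => /and3P[hp /eqP hlp _].
have hg' : is_graph n (rem_edge adj i k) := rem_edge_graph i k hg.
have [_ hs' _] := hg'.
have rji : reach (rem_edge adj i k) j i.
  exists q; rewrite hlq eqxx andbT.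
  apply: (path_restrict (P := fun v => v < k)) hq => // a b ha hb hab.
  by rewrite /rem_edge hab (ltn_eqF ha) (ltn_eqF hb) andbF /=.
have rjk : reach (rem_edge adj i k) j k.
  exists p; rewrite hlp eqxx andbT.
  apply: (path_restrict (P := fun v => v != i)) hp => //.
  + move=> a b ha hb hab.
    by rewrite /rem_edge hab (negbTE ha) (negbTE hb) andbF /=.
  + apply/allP => v hv; apply/eqP => hvi; move: hni; by rewrite -hvi hv.
have rik : reach (rem_edge adj i k) i k.
  exact: reach_trans (reach_sym hs' rji) rjk.
have edge' : forall a b, adj a b -> reach (rem_edge adj i k) a b.
  move=> a b hab; case E: (rem_edge adj i k a b); first exact: reach_edge.
  move: E; rewrite /rem_edge hab /= => /negbFE /orP[] /andP[/eqP -> /eqP ->] //.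
  exact: reach_sym hs' rik.
have hconn' : connected_on n (rem_edge adj i k).
  move=> x y hx hy; have [p0 /andP[hp0 /eqP hl0]] := hconn x y hx hy.
  suff : reach (rem_edge adj i k) x (last x p0) by rewrite hl0.
  elim: p0 x hp0 {hx hl0} => [|z p0 IH] x /=; first by move=> _; apply: reach_refl.
  move=> /andP[hxz hp']; exact: reach_trans (edge' _ _ hxz) (IH _ hp').
have hb := @cover_bound n (num_edges n (rem_edge adj i k)) (rem_edge adj i k) [:: 1] hg' erefl.
have hlt := num_edges_rem hi1 hik hkn eik.
have : n <= size [:: 1] + num_edges n (rem_edge adj i k).
  apply: hb => v hv; exists 1; first by rewrite inE.
  apply: hconn' => //; rewrite /in_range; lia.
move=> /= H; rewrite hne in hlt; lia.
Qed.
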